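(* Let $(D,\tau,d,\Delta)$ be a TMO instance with optimal makespan $\mathrm{OPT}$ (with $t$ reachable from $s$). Then there exists a flow over time in $D$ with unit arc capacities and transit times $\tau$, with time horizon $\mathrm{OPT}+\Delta$ and value at least $d\cdot\Delta$.
   Context: TMO instance $(D,\tau,d,\Delta)$: directed graph $D=(V,A)$ with source $s$, sink $t$, travel times $\tau:A\to\mathbb{Z}_{\ge0}$, $d\in\mathbb{Z}_{\ge1}$ trains, headway $\Delta\in\mathbb{Z}_{\ge1}$. A train routing assigns to each train $i\in[d]$ an $s$-$t$-path $P_i$ and entry times $\lambda_i:P_i\to\mathbb{Z}_{\ge0}$; it is feasible if $\lambda_i(a)+\tau_a\le\lambda_i(a')$ for consecutive arcs $a,a'$ of $P_i$ and $|\lambda_i(a)-\lambda_{i'}(a)|\ge\Delta$ for $i\ne i'$, $a\in P_i\cap P_{i'}$; makespan $=\max_i\max_{a\in P_i}(\lambda_i(a)+\tau_a)$; $\mathrm{OPT}$ is the minimum makespan. A flow over time with unit capacities and time horizon $T$ (continuous-time model) consists of measurable inflow rate functions $f_a:\mathbb{R}\to[0,1]$, $a\in A$, with $f_a(\theta)=0$ for $\theta\notin[0,T-\tau_a)$, where flow entering $a$ at time $\theta$ leaves $a$ at time $\theta+\tau_a$, satisfying flow conservation without storage at every $v\notin\{s,t\}$: $\sum_{a\in\delta^-(v)}f_a(\theta-\tau_a)=\sum_{a\in\delta^+(v)}f_a(\theta)$ for almost all $\theta$. Its value is the net amount of flow arriving at $t$ by time $T$, $\sum_{a\in\delta^-(t)}\int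 f_a-\sum_{a\in\delta^+(t)}\int f_a$. *)

(* Defs.v *)
From HB Require Import structures.
From mathcomp Require Import all_boot all_order all_algebra.
From mathcomp Require Import all_classical all_reals all_analysis.
Set Implicit Arguments. Unset Strict Implicit. Unset Printing Implicit Defensive.
Import Order.TTheory GRing.Theory Num.Theory.

(* A directed graph D = (V, A) is given by finite types V, A and maps
   tl hd : A -> V (tail and head of an arc); parallel arcs are allowed. *)

Definition is_st_path (V A : finType) (tl hd : A -> V) (s t : V) (p : seq A)
  : bool :=
  match p with
  | [::] => false
  | a0 :: p' =>
      [&& tl a0 == s, path (fun a b => hd a == tl b) a0 p',
          hd (last a0 p') == t & uniq (tl a0 :: map hd p)]
  end.

Definition reachable (V A : finType) (tl hd : A -> V) (s t : V) : bool :=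
  connect (fun u v => [exists a, (tl a == u) && (hd a == v)]) s t.

(* A train routing: for each train i < d an s-t-path P i and entry times
   lam i : A -> nat (only the values on arcs of P i matter). *)
Definition feasible_routing (V A : finType) (tl hd : A -> V) (s t : V)
  (tau : A -> nat) (d Delta : nat)
  (P : 'I_d -> seq A) (lam : 'I_d -> A -> nat) : Prop :=
  (forall i, is_st_path tl hd s t (P i)) /\
  (forall i, sorted (fun a b => lam i a + tau a <= lam i b)%N (P i)) /\
  (forall i i', i != i' -> forall a, a \in P i -> a \in P i' ->
     (lam i a + Delta <= lam i' a)%N || (lam i' a + Delta <= lam i a)%N).

Definition makespan (A : finType) (tau : A -> nat) (d : nat)
  (P : 'I_d -> seq A) (lam : 'I_d -> A -> nat) : nat :=
  \max_(i < d) \max_(a <- P i) (lam i a + tau a).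

Definition is_OPT (V A : finType) (tl hd : A -> V) (s t : V)
  (tau : A -> nat) (d Delta : nat) (OPT : nat) : Prop :=
  (exists (P : 'I_d -> seq A) (lam : 'I_d -> A -> nat), feasible_routing tl hd s t tau Delta P lam /\
                 makespan tau P lam = OPT) /\
  (forall (P : 'I_d -> seq A) (lam : 'I_d -> A -> nat), feasible_routing tl hd s t tau Delta P lam ->
                 (OPT <= makespan tau P lam)%N).

Local Open Scope ring_scope.

(* Flow over time with unit capacities, transit times tau and horizon T
   (continuous-time model): measurable inflow rates f a : R -> [0,1],
   vanishing outside [0, T - tau a), with flow conservation without storage
   at every v not in {s,t} for almost all theta. *)
Definition flow_over_time (R : realType) (V A : finType) (tl hd : A -> V)
  (s t : V) (tau : A -> nat) (T : R) (f : A -> R -> R) : Prop :=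
  (forall a, measurable_fun setT (f a)) /\
  (forall a x, 0 <= f a x <= 1) /\
  (forall a x, ~ (0 <= x /\ x < T - (tau a)%:R) -> f a x = 0) /\
  (forall v, v != s -> v != t ->
     {ae (@lebesgue_measure R), forall x,
        \sum_(a | hd a == v) f a (x - (tau a)%:R) =
        \sum_(a | tl a == v) f a x}).

Definition fot_value (R : realType) (V A : finType) (tl hd : A -> V)
  (t : V) (f : A -> R -> R) : \bar R :=
  (\sum_(a | hd a == t) (\int[@lebesgue_measure R]_x (f a x)%:E)
   - \sum_(a | tl a == t) (\int[@lebesgue_measure R]_x (f a x)%:E))%E.

(* Main.v *)
Require Import Defs.
From HB Require Import structures.
From mathcomp Require Import all_boot all_order all_algebra.
From mathcomp Require Import all_classical all_reals all_analysis measurable_realfun.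
From mathcomp Require Import zify ring lra.
From Stdlib Require Import Lia.
Set Implicit Arguments. Unset Strict Implicit. Unset Printing Implicit Defensive.
Import Order.TTheory GRing.Theory Num.Theory.
Local Open Scope ring_scope.

Section Tele.
Variables (V E : finType) (etl ehd : E -> V) (tau : E -> nat).

Fixpoint off (q : seq E) (c0 : nat) (a : E) : nat :=
  if q is b :: q' then (if a == b then c0 else off q' (c0 + tau b)%N a) else 0%N.

Definition len (q : seq E) : nat := (\sum_(b <- q) tau b)%N.

Lemma sum_cons (M : nmodType) (P : pred E) (G : E -> M) a0 q :
  a0 \notin q ->
  \sum_(a | P a && (a \in a0 :: q)) G a = G a0 *+ P a0 + \sum_(a | P a && (a \in q)) G a.
Proof.
move=> na0; case: (boolP (P a0)) => Pa0.
  rewrite (bigD1 a0) /=; last by rewrite inE eqxx Pa0.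
  rewrite mulr1n; congr (_ + _); apply: eq_bigl => a.
  rewrite inE; case: (eqVneq a a0) => [->|] /=; first by rewrite (negbTE na0) !andbF.
  by rewrite andbT.
rewrite mulr0n add0r; apply: eq_bigl => a; rewrite inE.
case: (eqVneq a a0) => [->|] /=; first by rewrite (negbTE na0) (negbTE Pa0).
by [].
Qed.

Definition erel (a b : E) := ehd a == etl b.

Lemma tele (M : zmodType) (F : nat -> M) v : forall q a0 c0,
  path erel a0 q -> uniq (a0 :: q) ->
  \sum_(a | (ehd a == v) && (a \in (a0 :: q : seq E))) F (off (a0 :: q) c0 a + tau a)%N
  - \sum_(a | (etl a == v) && (a \in (a0 :: q : seq E))) F (off (a0 :: q) c0 a)
  = F (c0 + len (a0 :: q))%N *+ (ehd (last a0 q) == v) - F c0 *+ (etl a0 == v).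
Proof.
elim=> [|a1 q IH] a0 c0 /=.
  move=> _ _.
  rewrite !(@sum_cons _ _ _ a0 [::]) // !big_pred0 => [|a|a]; last 2 first.
  - by rewrite in_nil andbF.
  - by rewrite in_nil andbF.
  by rewrite !addr0 /= eqxx /len big_seq1.
move=> /andP [ra0 pq] /andP [na0 uq].
rewrite !(@sum_cons _ _ _ a0 (a1 :: q)) //= eqxx.
have E1 : forall (G : E -> nat -> M) P, \sum_(a | P a && (a \in a1 :: q)) G a (if a == a0 then c0 else off (a1 :: q) (c0 + tau a0) a)
   = \sum_(a | P a && (a \in a1 :: q)) G a (off (a1 :: q) (c0 + tau a0) a).
  move=> G P; apply: eq_bigr => a /andP [_ aq].
  by case: (eqVneq a a0) => [e|//]; rewrite -e aq in na0.
rewrite (E1 (fun a n => F (n + tau a)%N)) (E1 (fun a n => F n)).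
have H := IH a1 (c0 + tau a0)%N pq uq.
rewrite opprD addrACA H.
have -> : etl a1 = ehd a0 by move/eqP: ra0.
rewrite /len /= !big_cons !addnA.
by rewrite addrC addrA subrK addrC.
Qed.

Lemma off_le q a0 c0 a : a \in a0 :: q -> (off (a0 :: q) c0 a + tau a <= c0 + len (a0 :: q))%N.
Proof.
elim: q a0 c0 => [|a1 q IH] a0 c0 /=.
  by rewrite inE => /eqP ->; rewrite eqxx /len big_seq1.
rewrite inE; case: (eqVneq a a0) => [->|na] /=.
  by rewrite /len big_cons; lia.
move=> aq; have := IH a1 (c0 + tau a0)%N aq.
by rewrite /len /= !big_cons; lia.
Qed.

Lemma sum_fiber (M : nmodType) (f : E -> V) (P : pred V) (F : E -> M) :
  \sum_(v | P v) \sum_(a | f a == v) F a = \sum_(a | P (f a)) F a.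
Proof.
rewrite (partition_big f P) //=; apply: eq_bigr => v Pv.
by apply: eq_bigl => a; case: (eqVneq (f a) v) => [->|]; rewrite ?Pv ?andbF.
Qed.

End Tele.

Section Static.
Variables (V A : finType) (tl hd : A -> V) (s t : V) (tau : A -> nat) (T : nat).
Hypothesis st : s != t.

Definition bal (x : A -> bool) v : int :=
  \sum_(a | hd a == v) (x a)%:R - \sum_(a | tl a == v) (x a)%:R.
Definition consb (x : A -> bool) : bool :=
  [forall v, (v != s) ==> (v != t) ==> (bal x v == 0)].
Definition fval x := bal x t.
Definition cost (x : A -> bool) : int := \sum_a (x a * tau a)%:R.
Definition Phi x : int := T%:R * fval x - cost x.

Lemma consP x v : consb x -> v != s -> v != t -> bal x v = 0.
Proof.
move=> /forallP /(_ v) H vs vt.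
by move: H; rewrite vs vt /= => /eqP.
Qed.

Lemma bal_sumP x (P : pred V) :
  \sum_(v | P v) bal x v = \sum_(a | P (hd a)) (x a)%:R - \sum_(a | P (tl a)) (x a)%:R.
Proof. by rewrite sumrB !sum_fiber. Qed.

Lemma bal_s x : consb x -> bal x s = - fval x.
Proof.
move=> cx; have := bal_sumP x predT; rewrite /= subrr.
rewrite (bigD1 s) // (bigD1 t) /=; last by rewrite eq_sym.
rewrite big1 ?addr0; last by move=> v /andP [vs vt]; apply: consP.
by move/eqP; rewrite addr_eq0 => /eqP.
Qed.

Definition sedge (x : A -> bool) u v := [exists a, [&& x a, tl a == u & hd a == v]].

Lemma reach x : consb x -> 0 < fval x -> connect (sedge x) s t.
Proof.
move=> cx vpos; apply/negPn/negP => nst.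
pose Rs := [set v | connect (sedge x) s v].
have H1 : \sum_(v in Rs) bal x v = bal x s.
  rewrite (bigD1 s) /=; last by rewrite inE connect0.
  rewrite big1 ?addr0 // => v /andP [].
  rewrite inE => sv vs; apply: consP => //.
  by apply/negP => /eqP vt; rewrite -vt sv in nst.
have H2 : 0 <= \sum_(v in Rs) bal x v.
  rewrite bal_sumP subr_ge0 [leRHS]big_mkcond [leLHS]big_mkcond /=.
  apply: ler_sum => a _.
  case: (boolP (x a)) => xa /=; last by case: ifP; case: ifP.
  case: (boolP (tl a \in Rs)) => ta; last by case: ifP.
  have -> : hd a \in Rs.
    rewrite inE; apply: connect_trans (connect1 _); first by rewrite inE in ta; exact: ta.
    by apply/existsP; exists a; rewrite xa !eqxx.
  by [].
move: H2; rewrite H1 bal_s // oppr_ge0 => H2.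
by move: (lt_le_trans vpos H2); rewrite ltxx.
Qed.

Definition arel (a b : A) := hd a == tl b.

Lemma arc_path x : forall p u, path (sedge x) u p -> p != [::] ->
  exists a0 q, [/\ path arel a0 q, tl a0 = u, map hd (a0 :: q) = p & all x (a0 :: q)].
Proof.
elim=> [//|v p IH] u /= /andP [euv pp] _.
case/existsP: euv => a /and3P [xa /eqP tla /eqP hda].
case: p IH pp => [|v' p'] IH pp.
  by exists a, [::]; split; rewrite //= ?hda ?xa.
have [a1 [q [pq tla1 mq aq]]] := IH v pp isT.
exists a, (a1 :: q); split => //=.
- by rewrite /arel tla1 hda eqxx.
- by rewrite hda -mq.
- by rewrite xa.
Qed.

Lemma find_path x : consb x -> 0 < fval x ->
  exists a0 q, [/\ path arel a0 q, uniq (a0 :: q), tl a0 = s, hd (last a0 q) = t & all x (a0 :: q)].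
Proof.
move=> cx vp; have /connectP [p pp tp] := reach cx vp.
move: tp; case: (shortenP pp) => p' pp' up' _ tp.
have p'n : p' != [::] by apply/eqP => e; rewrite e /= in tp; by move: st; rewrite tp eqxx.
have [a0 [q [pq tla mq aq]]] := arc_path pp' p'n.
exists a0, q; split => //.
- by apply: (map_uniq (f := hd)); rewrite mq; case/andP: up'.
- by rewrite tp -mq /= last_map.
Qed.
End Static.

Definition ind (R : realType) (c w : nat) (x : R) : R :=
  if (c%:R <= x) && (x < (c + w)%:R) then 1 else 0.

Lemma ind0 (R : realType) c (x : R) : ind c 0 x = 0.
Proof. by rewrite /ind addn0; case: leP => //= h; rewrite ltNge h. Qed.

Lemma sum_splitQ (E : finType) (M : nmodType) (P : pred E) (Q : seq E) (G G1 G2 : E -> M) :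
  (forall a, a \in Q -> G a = G1 a /\ G2 a = 0) ->
  (forall a, a \notin Q -> G a = G2 a) ->
  \sum_(a | P a) G a = \sum_(a | P a && (a \in Q)) G1 a + \sum_(a | P a) G2 a.
Proof.
move=> h1 h2; rewrite big_mkcondr -big_split /=; apply: eq_bigr => a _.
case: (boolP (a \in Q)) => aQ.
  by have [-> ->] := h1 a aQ; rewrite addr0.
by rewrite h2 // add0r.
Qed.

Section Static2.
Variables (V A : finType) (tl hd : A -> V) (s t : V) (tau : A -> nat) (T : nat).
Hypothesis st : s != t.
Variable R : realType.

Notation bal := (bal tl hd).
Notation consb := (consb tl hd s t).
Notation fval := (fval tl hd t).
Notation cost := (cost tau).
Notation Phi := (Phi tl hd t tau T).
Notation arel := (arel tl hd).

Definition goodcw (x : A -> bool) (c w : A -> nat) :=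
  [/\ forall a, (0 < w a)%N -> x a,
      forall a, (0 < w a)%N -> (c a + w a + tau a <= T)%N,
      forall v, v != s -> v != t -> forall r : R,
         \sum_(a | hd a == v) ind (c a + tau a) (w a) r = \sum_(a | tl a == v) ind (c a) (w a) r
    & Phi x <= (\sum_(a | hd a == t) w a)%:R - (\sum_(a | tl a == t) w a)%:R].

Lemma zero_ok x : fval x <= 0 -> goodcw x (fun _ => 0%N) (fun _ => 0%N).
Proof.
move=> vx; split => //.
  by move=> v _ _ r; rewrite !big1 // => a _; rewrite ind0.
rewrite !big1 // subrr /Phi.
have : 0 <= cost x by apply: sumr_ge0 => a _; rewrite ler0n.
have := mulr_ge0_le0 (ler0n _ T) vx.
lia.
Qed.
End Static2.
Section Static3.
Variables (V A : finType) (tl hd : A -> V) (s t : V) (tau : A -> nat) (T : nat).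
Hypothesis st : s != t.
Variable R : realType.

Notation bal := (bal tl hd).
Notation consb := (consb tl hd s t).
Notation fval := (fval tl hd t).
Notation cost := (cost tau).
Notation Phi := (Phi tl hd t tau T).
Notation arel := (arel tl hd).
Notation goodcw := (goodcw tl hd s t tau T R).

Section Remove.
Variables (x : A -> bool) (a0 : A) (q : seq A).
Hypotheses (pq : path arel a0 q) (uq : uniq (a0 :: q)) (ta0 : tl a0 = s)
  (hq : hd (last a0 q) = t) (xq : all x (a0 :: q)).
Let x' := fun a => x a && (a \notin a0 :: q).

Lemma splitx (P : pred A) : \sum_(a | P a) ((x a)%:R : int) =
   \sum_(a | P a && (a \in a0 :: q)) 1 + \sum_(a | P a) (x' a)%:R.
Proof.
apply: sum_splitQ => a aQ; rewrite /x' ?aQ ?andbT ?andbF //.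
by rewrite (allP xq a aQ).
Qed.

Lemma bal_rm v : bal x v = bal x' v + ((t == v)%:R - (s == v)%:R).
Proof.
rewrite /bal !splitx.
have := tele (V:=V) (etl:=tl) (ehd:=hd) tau (fun _ => (1 : int)) v 0 pq uq.
rewrite hq ta0 => H.
by rewrite -H; ring.
Qed.

Lemma cons_rm : consb x -> consb x'.
Proof.
move=> cx; apply/forallP => v; apply/implyP => vs; apply/implyP => vt.
have := bal_rm v; rewrite (@consP _ _ tl hd s t x v cx vs vt) eq_sym (negbTE vt) eq_sym (negbTE vs) subrr addr0.
by move=> <-.
Qed.

Lemma val_rm : fval x = fval x' + 1.
Proof. by rewrite /fval bal_rm eqxx (negbTE st) subr0. Qed.

Lemma cost_rm : cost x = cost x' + (len tau (a0 :: q))%:R.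
Proof.
rewrite /cost (@sum_splitQ _ _ predT (a0 :: q) _ (fun a => (tau a)%:R) (fun a => (x' a * tau a)%:R)).
- rewrite addrC; congr (_ + _).
  by rewrite /len (big_uniq _ uq) natr_sum.
- by move=> a aQ; rewrite /x' aQ andbF (allP xq a aQ) mul1n.
- by move=> a naQ; rewrite /x' naQ andbT.
Qed.

Lemma supp_rm : (\sum_a x' a < \sum_a x a)%N.
Proof.
rewrite (bigD1 a0) //= [X in (_ < X)%N](bigD1 a0) //= /x' inE eqxx /= andbF.
rewrite (allP xq a0) ?inE ?eqxx // add0n add1n ltnS leq_sum // => a _.
by move: (x a) (a \notin a0 :: q) => [] [].
Qed.
End Remove.
End Static3.
Section Static4.
Variables (V A : finType) (tl hd : A -> V) (s t : V) (tau : A -> nat) (T : nat).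
Hypothesis st : s != t.
Variable R : realType.

Notation bal := (bal tl hd).
Notation consb := (consb tl hd s t).
Notation fval := (fval tl hd t).
Notation cost := (cost tau).
Notation Phi := (Phi tl hd t tau T).
Notation arel := (arel tl hd).
Notation goodcw := (goodcw tl hd s t tau T R).

Lemma flow_static n : forall x : A -> bool, (\sum_a x a <= n)%N -> consb x ->
  exists c w, goodcw x c w.
Proof.
elim: n => [|n IH] x sx cx.
  case: (lerP (fval x) 0) => vx.
    by exists (fun _ => 0%N), (fun _ => 0%N); apply: zero_ok.
  have [a0 [q [pq uq ta0 hq xq]]] := find_path st cx vx.
  exfalso; move: sx; rewrite (bigD1 a0) //= (allP xq a0) //.
  by rewrite inE eqxx.
case: (lerP (fval x) 0) => vx.
  by exists (fun _ => 0%N), (fun _ => 0%N); apply: zero_ok.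
have [a0 [q [pq uq ta0 hq xq]]] := find_path st cx vx.
pose x' := fun a => x a && (a \notin a0 :: q).
have sx' : (\sum_a x' a <= n)%N.
  move: (supp_rm xq) => h; rewrite -ltnS; exact: leq_trans h sx.
have [c' [w' [g1 g2 g3 g4]]] := IH x' sx' (cons_rm tau pq uq ta0 hq xq cx).
set L := len tau (a0 :: q).
have PhiE : Phi x = Phi x' + (T%:R - L%:R).
  rewrite /Phi (val_rm tau st pq uq ta0 hq xq) (cost_rm tau uq xq) -/x' -/L.
  ring.
case: (leqP T L) => TL.
  exists c', w'; split => //.
  - by move=> a /g1; rewrite /x' => /andP [].
  - rewrite PhiE; apply: le_trans g4; by rewrite gerDl subr_le0 ler_nat.
pose W := (T - L)%N.
exists (fun a => if a \in a0 :: q then off tau (a0 :: q) 0%N a else c' a),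
       (fun a => if a \in a0 :: q then W else w' a).
have w'Q : forall a, a \in a0 :: q -> w' a = 0%N.
  move=> a aQ; apply/eqP; rewrite -leqn0 leqNgt; apply/negP => /g1.
  by rewrite /x' aQ andbF.
split.
- move=> a; case: ifP => aQ; first by rewrite (allP xq).
  by move/g1 => /andP [].
- move=> a; case: ifP => aQ h; last exact: g2.
  have H := off_le tau 0%N aQ; rewrite /W addnAC.
  apply: leq_trans (leq_add H (leqnn (T - L))) _.
  by rewrite add0n subnKC // ltnW.
- move=> v vs vt r.
  rewrite (@sum_splitQ _ _ _ (a0 :: q) _ (fun a => ind (off tau (a0 :: q) 0%N a + tau a) W r)
     (fun a => ind (c' a + tau a) (w' a) r)); last 2 first.
  + by move=> a aQ; rewrite aQ w'Q // ind0.
  + by move=> a /negbTE ->.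
  rewrite [RHS](@sum_splitQ _ _ _ (a0 :: q) _ (fun a => ind (off tau (a0 :: q) 0%N a) W r)
     (fun a => ind (c' a) (w' a) r)); last 2 first.
  + by move=> a aQ; rewrite aQ w'Q // ind0.
  + by move=> a /negbTE ->.
  have := tele (V:=V) (etl:=tl) (ehd:=hd) tau (fun n => ind n W r) v 0%N pq uq.
  rewrite hq ta0 eq_sym (negbTE vt) eq_sym (negbTE vs) !mulr0n subrr.
  move/eqP; rewrite subr_eq0 => /eqP ->.
  by rewrite g3.
- rewrite (@sum_splitQ _ _ _ (a0 :: q) _ (fun a => W) w'); last 2 first.
  + by move=> a aQ; rewrite aQ w'Q.
  + by move=> a /negbTE ->.
  rewrite [X in _ - X%:R](@sum_splitQ _ _ _ (a0 :: q) _ (fun a => W) w'); last 2 first.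
  + by move=> a aQ; rewrite aQ w'Q.
  + by move=> a /negbTE ->.
  have := tele (V:=V) (etl:=tl) (ehd:=hd) tau (fun n => (W%:R : int)) t 0%N pq uq.
  rewrite hq ta0 eqxx (negbTE st) mulr0n subr0 mulr1n.
  rewrite !natrD !natr_sum => H.
  have WE : (W%:R : int) = T%:R - L%:R by rewrite /W natrB // ltnW.
  rewrite PhiE; rewrite WE in H *.
  move: H.
  set S1 := (\sum_(a | (hd a == t) && (a \in a0 :: q)) _).
  set S2 := (\sum_(a | (tl a == t) && (a \in a0 :: q)) _).
  move=> H.
  have H' : S1 - S2 = T%:R - L%:R by exact: H.
  have g4' : Phi x' <= \sum_(a | hd a == t) ((w' a)%:R : int) - \sum_(a | tl a == t) (w' a)%:R.
    by rewrite -!natr_sum.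
  have key : Phi x' + (T%:R - L%:R) <= (S1 - S2) + (\sum_(a | hd a == t) ((w' a)%:R : int) - \sum_(a | tl a == t) (w' a)%:R).
    by rewrite H' addrC lerD2l.
  apply: le_trans key _; rewrite le_eqVlt; apply/orP; left; apply/eqP.
  ring.
Qed.
End Static4.

Section Measure.
Local Open Scope classical_set_scope.
Variable R : realType.

Lemma ind_indic c w : ind (R:=R) c w = \1_(`[(c%:R : R), (c + w)%:R[).
Proof.
apply/funext => x; rewrite /ind indicE mem_setE in_itv /=.
by case: ifP.
Qed.

Lemma ind_meas c w : measurable_fun setT (ind (R:=R) c w).
Proof. rewrite ind_indic; apply: measurable_indic; exact: measurable_itv. Qed.

Lemma ind_int c w :
  (\int[@lebesgue_measure R]_x (ind c w x)%:E = (w%:R)%:E)%E.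
Proof.
rewrite ind_indic (integral_indic _ measurableT); last exact: measurable_itv.
rewrite setIT.
have := lebesgue_measure_itv (Interval (BLeft (c%:R:R)) (BLeft (c+w)%:R)).
rewrite /= => ->; rewrite lte_fin ltr_nat; case: ltnP => h.
  by rewrite -EFinB natrD addrAC subrr add0r.
by have -> : w = 0%N by lia.
Qed.

Lemma ind_shift c w k (x : R) : ind c w (x - k%:R) = ind (c + k) w x.
Proof.
rewrite /ind !natrD lerBrDr ltrBlDr.
by rewrite [(c%:R + w%:R + k%:R)]addrAC.
Qed.

Lemma ind01 c w (x : R) : 0 <= ind c w x <= 1.
Proof. by rewrite /ind; case: ifP; rewrite ?lexx ?ler01. Qed.

Lemma ind_supp c w (x : R) : ind c w x != 0 -> (c%:R <= x) && (x < (c + w)%:R).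
Proof. by rewrite /ind; case: ifP => // _; rewrite eqxx. Qed.

Variables (V A : finType) (tl hd : A -> V) (s t : V) (tau : A -> nat) (T : nat).

Lemma flow_of_cw (c w : A -> nat) :
  (forall a, (0 < w a)%N -> (c a + w a + tau a <= T)%N) ->
  (forall v, v != s -> v != t -> forall r : R,
         \sum_(a | hd a == v) ind (c a + tau a) (w a) r = \sum_(a | tl a == v) ind (c a) (w a) r) ->
  flow_over_time tl hd s t tau (T%:R : R) (fun a => ind (c a) (w a)) /\
  fot_value tl hd t (fun a => ind (c a) (w a)) =
    (((\sum_(a | hd a == t) w a)%:R - (\sum_(a | tl a == t) w a)%:R : R))%:E.
Proof.
move=> hw hc; split; first split.
- by move=> a; exact: ind_meas.
- split; first by move=> a x; exact: ind01.
  split.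
    move=> a x hx; apply/eqP; apply/negP => /negP nz.
    have /andP [h1 h2] := ind_supp nz.
    case: (posnP (w a)) => wa; first by move: nz; rewrite wa ind0 eqxx.
    have := hw a wa => hT.
    apply: hx; split.
      by apply: le_trans h1.
    apply: (lt_le_trans h2).
    rewrite lerBrDr -!natrD ler_nat; lia.
  move=> v vs vt; apply: aeW => r.
  under eq_bigr do rewrite ind_shift.
  exact: hc.
- rewrite /fot_value.
  rewrite (eq_bigr (fun a => ((w a)%:R : R)%:E)); last by move=> a _; exact: ind_int.
  rewrite [X in (_ - X)%E](eq_bigr (fun a => ((w a)%:R : R)%:E)); last by move=> a _; exact: ind_int.
  by rewrite !sumEFin -EFinB !natr_sum.
Qed.
End Measure.

Section Pot.
Variables (V E : finType) (etl ehd : E -> V) (c : E -> int).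

Fixpoint wk (v : V) (W : seq E) : bool :=
  match W with
  | [::] => true
  | e :: W' => (if W' is f :: _ then ehd e == etl f else ehd e == v) && wk v W'
  end.

Definition wcost (W : seq E) : int := \sum_(e <- W) c e.

Lemma wk_cat u W1 e W2 : wk u (W1 ++ e :: W2) = wk (etl e) W1 && wk u (e :: W2).
Proof.
elim: W1 => [|a W1 IH] //=.
rewrite IH; case: W1 IH => [|b W1'] IH /=; first by rewrite andbT.
by rewrite andbA.
Qed.

Lemma wk_tele (v u : V) : forall W e, wk u (e :: W) ->
  \sum_(x <- e :: W) ((ehd x == v)%:R - (etl x == v)%:R : int) = (u == v)%:R - (etl e == v)%:R.
Proof.
elim=> [|f W IH] e /=.
  by rewrite andbT => /eqP <-; rewrite big_seq1.
move=> /andP [/eqP ef wf]; rewrite big_cons IH // -ef.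
ring.
Qed.

Definition Bc : int := \sum_e `|c e|.

Lemma wcost_lb W : uniq W -> - Bc <= wcost W.
Proof.
move=> uW; rewrite /wcost /Bc (big_uniq _ uW) /=.
rewrite lerNl -sumrN big_mkcond /=.
apply: ler_sum => e _; case: ifP => _; last by [].
lia.
Qed.

Hypothesis nonneg : forall e0 W, uniq (e0 :: W) -> wk (etl e0) (e0 :: W) -> 0 <= wcost (e0 :: W).

Lemma min_walk v : exists W0, [/\ uniq W0, wk v W0 &
  forall W, uniq W -> wk v W -> wcost W0 <= wcost W].
Proof.
pose P n := `[< exists W, [/\ uniq W, wk v W & wcost W + Bc = n%:Z] >].
have Bpos : 0 <= Bc by apply: sumr_ge0 => e _.
have exP : exists n, P n.
  exists (absz Bc); apply/asboolP; exists [::]; split => //.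
  by rewrite /wcost big_nil add0r gez0_abs.
case: (ex_minnP exP) => n0 /asboolP [W0 [u0 w0 c0]] mn.
exists W0; split => // W uW wW.
have h : 0 <= wcost W + Bc by rewrite -lerBlDr sub0r; exact: wcost_lb.
have := mn (absz (wcost W + Bc)).
rewrite -(lerD2r Bc) c0.
have -> : P (absz (wcost W + Bc)) by apply/asboolP; exists W; split => //; rewrite gez0_abs.
move=> /(_ isT) H; move: h H; clear; lia.
Qed.

Lemma potentials : exists pi : V -> int, forall e, pi (ehd e) <= pi (etl e) + c e.
Proof.
case: (choice min_walk) => f hf.
exists (fun v => wcost (f v)) => e.
have [_ _ m1] := hf (ehd e).
move: (hf (etl e)); move: (f (etl e)) => W0 [u0 w0 m0].
have wcr W : wcost (rcons W e) = wcost W + c e by rewrite /wcost -cats1 big_cat big_seq1.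
have wkr W : wk (etl e) W -> wk (ehd e) (rcons W e).
  by move=> h; rewrite -cats1 wk_cat h /= eqxx.
case: (boolP (e \in W0)) => eW; last first.
  apply: le_trans (m1 (rcons W0 e) _ _) _; rewrite ?rcons_uniq ?eW ?wkr //.
  by rewrite wcr.
case/splitPr: eW u0 w0 m0 => W1 W2 u0 w0 m0.
move: u0; rewrite cat_uniq => /and3P [u1 nh u2].
move: w0; rewrite wk_cat => /andP [w1 w2].
have eW1 : e \notin W1 by apply: contra nh => h; apply/hasP; exists e; rewrite ?inE ?eqxx.
have hn := nonneg u2 w2.
apply: le_trans (m1 (rcons W1 e) _ _) _; rewrite ?rcons_uniq ?eW1 ?u1 ?wkr //.
rewrite wcr /wcost big_cat /= big_cons.
by move: hn; rewrite /wcost big_cons lerD2r lerDl.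
Qed.
End Pot.

Lemma sum_delta (V : finType) (u : V) (c : int) : \sum_v (u == v)%:R * c = c.
Proof.
rewrite (bigD1 u) //= eqxx mul1r big1 ?addr0 // => v vu.
by rewrite eq_sym (negbTE vu) mul0r.
Qed.

Section Resid.
Variables (V A : finType) (tl hd : A -> V) (s t : V) (tau : A -> nat) (T : nat).
Hypothesis st : s != t.

Notation bal := (bal tl hd).
Notation consb := (consb tl hd s t).
Notation fval := (fval tl hd t).
Notation cost := (cost tau).
Notation Phi := (Phi tl hd t tau T).

Definition rtl (x : A -> bool) (e : A + bool) : V :=
  match e with inl a => if x a then hd a else tl a | inr b => if b then t else s end.
Definition rhd (x : A -> bool) (e : A + bool) : V :=
  match e with inl a => if x a then tl a else hd a | inr b => if b then s else t end.
Definition rc (x : A -> bool) (e : A + bool) : int :=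
  match e with inl a => if x a then - (tau a)%:R else (tau a)%:R
             | inr b => if b then - T%:R else T%:R end.

Lemma balE z v : bal z v = \sum_a ((hd a == v)%:R - (tl a == v)%:R) * (z a)%:R.
Proof.
rewrite /bal (big_mkcond (fun a => hd a == v)) (big_mkcond (fun a => tl a == v)) /= -sumrB; apply: eq_bigr => a _.
by rewrite mulrBl; case: (hd a == v); case: (tl a == v); rewrite ?mul1r ?mul0r.
Qed.

Lemma sum_inC (C : seq (A + bool)) (F : A + bool -> int) : uniq C ->
  \sum_(e <- C) F e = \sum_a (if inl a \in C then F (inl a) else 0)
     + ((if inr true \in C then F (inr true) else 0) + (if inr false \in C then F (inr false) else 0)).
Proof.
move=> uC; rewrite (big_uniq _ uC) big_mkcond big_sumType /=.
by rewrite big_bool.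
Qed.

Lemma opt_nonneg x : consb x -> (forall y, consb y -> Phi y <= Phi x) ->
  forall e0 W, uniq (e0 :: W) -> wk (rtl x) (rhd x) (rtl x e0) (e0 :: W) ->
  0 <= wcost (rc x) (e0 :: W).
Proof.
move=> cx opt e0 W uC wC; rewrite leNgt; apply/negP => neg.
set C := e0 :: W in uC wC neg.
pose y a := x a (+) (inl a \in C).
pose k : int := (inr true \in C)%:R - (inr false \in C)%:R.
have tel v : \sum_a (if inl a \in C then (rhd x (inl a) == v)%:R - (rtl x (inl a) == v)%:R else 0)
    = k * ((t == v)%:R - (s == v)%:R).
  have := wk_tele v wC; rewrite subrr -/C (sum_inC _ uC) /= => /eqP.
  rewrite addr_eq0 => /eqP ->; rewrite /k.
  by case: (inr true \in C); case: (inr false \in C); rewrite /=; ring.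
have baly v : bal y v = bal x v + k * ((t == v)%:R - (s == v)%:R).
  rewrite -tel !balE -big_split /=; apply: eq_bigr => a _.
  rewrite /y /=; case: (x a); case: (inl a \in C) => /=; ring.
have cy : consb y.
  apply/forallP => v; apply/implyP => vs; apply/implyP => vt.
  have e1 : (t == v) = false by rewrite eq_sym (negbTE vt).
  have e2 : (s == v) = false by rewrite eq_sym (negbTE vs).
  by rewrite baly (consP cx vs vt) e1 e2 subrr mulr0 addr0.
have := opt y cy.
have costy : cost y = cost x + \sum_a (if inl a \in C then rc x (inl a) else 0).
  rewrite /cost -big_split /=; apply: eq_bigr => a _.
  rewrite /y /=; case: (x a); case: (inl a \in C) => /=; rewrite ?mul1n ?mul0n; ring.
have wc : wcost (rc x) C = \sum_a (if inl a \in C then rc x (inl a) else 0) - k * T%:R.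
  rewrite /wcost (sum_inC _ uC) /k /=.
  by case: (inr true \in C); case: (inr false \in C); rewrite /=; ring.
rewrite /Phi costy /fval baly eqxx (negbTE st).
move: neg; rewrite wc.
set S := \sum_a _.
move=> h1 h2.
have : (T%:R * (bal x t) - cost x) - (S - k * T%:R) <= T%:R * (bal x t) - cost x.
  apply: le_trans h2; rewrite le_eqVlt; apply/orP; left; apply/eqP.
  rewrite /= subr0 mulr1. ring.
by rewrite gerBl leNgt h1.
Qed.

Lemma Phi_pos x (pi : V -> int) : consb x ->
  (forall e, pi (rhd x e) <= pi (rtl x e) + rc x e) ->
  Phi x = \sum_a Num.max 0 (pi (hd a) - pi (tl a) - (tau a)%:R) /\ pi t - pi s = T%:R.
Proof.
move=> cx hpi.
have hT : pi t - pi s = T%:R.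
  have h1 := hpi (inr true); have h2 := hpi (inr false); move: h1 h2 => /=; lia.
split => //.
have ex : forall a, Num.max 0 (pi (hd a) - pi (tl a) - (tau a)%:R) =
     (x a)%:R * (pi (hd a) - pi (tl a)) - (x a * tau a)%:R.
  move=> a; have := hpi (inl a); rewrite /=; case: (x a) => /= h.
    by rewrite mul1r mul1n max_r //; lia.
  by rewrite mul0r mul0n sub0r oppr0 max_l //; lia.
rewrite (eq_bigr _ (fun a _ => ex a)) sumrB.
have -> : \sum_a (x a)%:R * (pi (hd a) - pi (tl a)) = \sum_v pi v * bal x v.
  under [RHS]eq_bigr do rewrite balE mulr_sumr.
  rewrite exchange_big /=; apply: eq_bigr => a _.
  rewrite (eq_bigr (fun v => ((hd a == v)%:R * pi (hd a) - (tl a == v)%:R * pi (tl a)) * (x a)%:R)); last first.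
    move=> v _; case: (eqVneq (hd a) v) => [->|_]; case: (eqVneq (tl a) v) => [->|_] /=; ring.
  rewrite -mulr_suml sumrB.
  by rewrite !sum_delta mulrC.
rewrite (bigD1 s) //= (bigD1 t) 1?eq_sym //= big1; last first.
  by move=> v /andP [vs vt]; rewrite (consP cx vs vt) mulr0.
rewrite (bal_s st cx) /fval addr0 /Phi /cost -natr_sum.
rewrite -hT; ring.
Qed.
End Resid.

Lemma count_itv (lo m : int) N :
  ((\sum_(th < N) (nat_of_bool ((lo <= (th%:R : int))%R && ((th%:R : int) < m)%R)))%N%:R : int) <= Num.max 0 (m - lo).
Proof.
suff : forall N, ((\sum_(th < N) (nat_of_bool ((lo <= (th%:R : int))%R && ((th%:R : int) < m)%R)))%N%:R : int) <= Num.max 0 (N%:R - lo)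
   /\ ((\sum_(th < N) (nat_of_bool ((lo <= (th%:R : int))%R && ((th%:R : int) < m)%R)))%N%:R : int) <= Num.max 0 (m - lo) by move=> h; case: (h N).
elim=> [|n [IH1 IH2]]; first by rewrite big_ord0 /=; split; rewrite le_max lexx.
rewrite big_ord_recr /= natrD.
case: (boolP ((lo <= n%:R) && (n%:R < m))) => /= c.
  move: c => /andP [c1 c2]; move: IH1 IH2 c1 c2.
  set S := (\sum_(i < n) _)%N; clearbody S; rewrite -natr1; lia.
move: IH1 IH2.
set S := (\sum_(i < n) _)%N; clearbody S; rewrite -natr1; lia.
Qed.

Section Trains.
Variables (V A : finType) (tl hd : A -> V) (s t : V) (tau : A -> nat) (d Delta OPT : nat).
Variables (P : 'I_d -> seq A) (lam : 'I_d -> A -> nat) (pi : V -> int).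
Hypothesis fr : feasible_routing tl hd s t tau Delta P lam.
Hypothesis mk : makespan tau P lam = OPT.
Hypothesis hpi : pi t - pi s = (OPT + Delta)%:R.
Let rho v := pi v - pi s.

Lemma lam_bound i a : a \in P i -> (lam i a + tau a <= OPT)%N.
Proof.
move=> aP; rewrite -mk /makespan; apply: leq_trans (leq_bigmax i).
exact: (leq_bigmax_seq (P := xpredT)).
Qed.

Lemma cross_ex (lf : A -> nat) (dl : nat) : forall p a0,
  path (fun a b => hd a == tl b) a0 p -> path (fun a b => lf a + tau a <= lf b)%N a0 p ->
  rho (tl a0) <= (lf a0 + dl)%:R ->
  ((lf (last a0 p) + dl + tau (last a0 p))%:R < rho (hd (last a0 p))) ->
  exists2 a, a \in a0 :: p & (rho (tl a) <= (lf a + dl)%:R) && ((lf a + dl + tau a)%:R < rho (hd a)).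
Proof.
elim=> [|a1 p IH] a0 /= hp sp h0 hl.
  by exists a0; rewrite ?inE ?eqxx ?h0 ?hl.
case/andP: hp => /eqP e1 hp; case/andP: sp => s1 sp.
case: (boolP ((lf a0 + dl + tau a0)%:R < rho (hd a0))) => c.
  by exists a0; rewrite ?inE ?eqxx ?h0 ?c.
have h1 : rho (tl a1) <= (lf a1 + dl)%:R.
  rewrite -e1; move: c; rewrite -leNgt => c; apply: le_trans c _; rewrite ler_nat; lia.
have [a ain ac] := IH a1 hp sp h1 hl.
by exists a; rewrite // inE ain orbT.
Qed.

Lemma trains_bound : (0 < Delta)%N ->
  ((d * Delta)%:R : int) <= \sum_a Num.max 0 (pi (hd a) - pi (tl a) - (tau a)%:R).
Proof.
move=> Dpos.
have sum_ge0 : 0 <= \sum_a Num.max 0 (pi (hd a) - pi (tl a) - (tau a)%:R).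
  by apply: sumr_ge0 => a _; rewrite le_max lexx.
case: (posnP d) => [d0|dpos]; first by rewrite d0 mul0n.
case: fr => fst [fso fhw].
have [a0 _] : exists a : A, True.
  move: (fst (Ordinal dpos)); case: (P _) => [//|a _ _]; by exists a.
pose N := (OPT + Delta)%N.
pose cr (u : 'I_d * 'I_Delta) a := [&& a \in P u.1, rho (tl a) <= (lam u.1 a + u.2)%:R
   & (lam u.1 a + u.2 + tau a)%:R < rho (hd a)].
have crex u : exists a, cr u a.
  move: (fst u.1) (fso u.1) (@lam_bound u.1).
  case E: (P u.1) => [//|b0 p] /= /and4P [/eqP tb0 pp /eqP hl _] sp lb.
  have h0 : rho (tl b0) <= (lam u.1 b0 + u.2)%:R by rewrite tb0 /rho subrr ler0n.
  have h1 : ((lam u.1 (last b0 p) + u.2 + tau (last b0 p))%:R < rho (hd (last b0 p))).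
    rewrite hl /rho hpi ltr_nat.
    have := lb (last b0 p) (mem_last _ _); have := ltn_ord u.2; lia.
  have [a ain ac] := cross_ex pp sp h0 h1.
  exists a; rewrite /cr E; case/andP: ac => ac1 ac2; apply/and3P; split => //.
pose phi u := let a := odflt a0 [pick a | cr u a] in (a, (inord (lam u.1 a + u.2) : 'I_N.+1)).
have phiP u : cr u (phi u).1 /\ ((phi u).2 : nat) = (lam u.1 (phi u).1 + u.2)%N.
  rewrite /phi /=; case: pickP => [a ca|none] /=; last first.
    by have [a ca] := crex u; move: (none a); rewrite ca.
  split => //; rewrite inordK // ltnS.
  case/and3P: ca => aP _ _; have := lam_bound aP; have := ltn_ord u.2; rewrite /N; lia.
have phi_inj : injective phi.
  move=> [i di] [j dj] e.
  have [[c1 e1] [c2 e2]] := (phiP (i, di), phiP (j, dj)).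
  move: e1 e2 c1 c2; rewrite e => /= -> e2 /and3P [aPi _ _] /and3P [aPj _ _].
  have ed : (lam i (phi (j, dj)).1 + di = lam j (phi (j, dj)).1 + dj)%N by [].
  case: (eqVneq i j) => [eij|nij].
    by subst j; congr (_, _); apply: val_inj => /=; lia.
  have := fhw i j nij _ aPi aPj; have := ltn_ord di; have := ltn_ord dj; lia.
have card1 : #|[set: 'I_d * 'I_Delta]| = (d * Delta)%N by rewrite cardsT card_prod !card_ord.
pose S := [set p : A * 'I_N.+1 | (rho (tl p.1) <= (p.2 : nat)%:R) && (((p.2 : nat) + tau p.1)%:R < rho (hd p.1))].
have sub : phi @: [set: 'I_d * 'I_Delta] \subset S.
  apply/fintype.subsetP => p /imsetP [u _ ->]; rewrite inE.
  have [/and3P [_ h1 h2] e2] := phiP u; by rewrite e2 h1 h2.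
have le1 : (d * Delta <= #|S|)%N by rewrite -card1 -(card_imset _ phi_inj); exact: subset_leq_card.
apply: le_trans (_ : (#|S|%:R : int) <= _); first by rewrite ler_nat.
rewrite -sum1_card big_mkcond /=.
pose F (a : A) (th : 'I_N.+1) := nat_of_bool ((rho (tl a) <= (th : nat)%:R)%R && ((rho (hd a) - (tau a)%:R) > (th : nat)%:R)%R).
rewrite (eq_bigr (fun p => F p.1 p.2)); last first.
  by move=> p _; rewrite inE /F natrD -ltrBrDr; case: ifP.
rewrite -(pair_bigA _ F) /= natr_sum; apply: ler_sum => a _.
apply: le_trans (count_itv _ _ _) _.
by rewrite /rho; lia.
Qed.
End Trains.

Lemma argmax_ex (I : finType) (P : pred I) (F : I -> int) i0 :
  P i0 -> exists2 i, P i & forall j, P j -> F j <= F i.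
Proof. by move=> Pi0; case: (arg_maxP F Pi0) => i Pi Hi; exists i => // j /Hi. Qed.

Close Scope ring_scope.

Theorem mainTheorem6 (R : realType) (V A : finType) (tl hd : A -> V)
  (s t : V) (tau : A -> nat) (d Delta OPT : nat) :
  s != t -> (0 < d)%N -> (0 < Delta)%N ->
  reachable tl hd s t ->
  is_OPT tl hd s t tau d Delta OPT ->
  exists f : A -> R -> R,
    flow_over_time tl hd s t tau ((OPT + Delta)%:R : R) f /\
    (((d * Delta)%:R : R)%:E <= fot_value tl hd t f)%E.
Proof.
Local Open Scope ring_scope.
move=> st dpos Dpos _ [[P [lam [fr mk]]] _].
pose T := (OPT + Delta)%N.
have c0 : consb tl hd s t [ffun=> false].
  apply/forallP => v; apply/implyP => _; apply/implyP => _.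
  by rewrite /bal !big1 ?subrr // => a _; rewrite ffunE.
have [xf cxf optf] := @argmax_ex _ (fun g : {ffun A -> bool} => consb tl hd s t g) (fun g : {ffun A -> bool} => Phi tl hd t tau T g) _ c0.
pose x : A -> bool := xf.
have opt : forall y : A -> bool, consb tl hd s t y -> Phi tl hd t tau T y <= Phi tl hd t tau T x.
  move=> y cy; have e : (fun_of_fin [ffun a => y a]) = y by apply: funext => a; rewrite ffunE.
  by have := optf [ffun a => y a]; rewrite e; apply.
have nonneg := opt_nonneg st cxf opt.
have [pi hpi] := potentials nonneg.
have [PhiE piT] := Phi_pos st cxf hpi.
have tb := trains_bound fr mk piT Dpos.
have [c [w [g1 g2 g3 g4]]] := flow_static tau T st R (leqnn _) cxf.
have [fot fv] := flow_of_cw g2 g3.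
exists (fun a => ind (c a) (w a)); split => //.
rewrite fv lee_fin.
rewrite -PhiE in tb; have h := le_trans tb g4.
move: h; set A1 := (\sum_(a | hd a == t) w a)%N; set A2 := (\sum_(a | tl a == t) w a)%N => h.
have hn : (A2 + d * Delta <= A1)%N by clearbody A1 A2; lia.
by rewrite lerBrDl -natrD ler_nat.
Qed.
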